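(* Let $\mathbf{A}=\langle A;\oplus,-,{}^{+},{}^{-},0,1\rangle$ be a quasi-MV* algebra. For $x,y\in A$ define $x\to y:=-x\oplus y$ and $\neg x:=-x$. Then $f(\mathbf{A})=\langle A;\to,\neg,{}^{+},{}^{-},1\rangle$ (with ${}^+,{}^-,1$ those of $\mathbf{A}$) is a quasi-Wajsberg* algebra, where in $f(\mathbf{A})$ the join is $x\vee y=((x^{+}\to y^{+})^{+}\to(\neg x)^{-})\to((y^{-}\to x^{-})^{-}\to x^{-})$.
   Context: A quasi-MV* algebra is an algebra $\langle A;\oplus,-,{}^{+},{}^{-},0,1\rangle$ of type $\langle2,1,1,1,0,0\rangle$ such that for all $x,y,z\in A$: (QMV*1) $x\oplus y=y\oplus x$; (QMV*2) $(1\oplus x)\oplus(y\oplus(1\oplus z))=((1\oplus x)\oplus y)\oplus(1\oplus z)$; (QMV*3) $(x\oplus 1)\oplus 1=1$; (QMV*4) $(x\oplus y)\oplus 0=x\oplus y$; (QMV*5) $x^{+}\oplus 0=(x\oplus 0)^{+}=1\oplus(-1\oplus x)$ and $x^{-}\oplus 0=(x\oplus 0)^{-}=-1\oplus(1\oplus x)$; (QMV*6) $x\oplus y=(x^{+}\oplus y^{+})\oplus(x^{-}\oplus y^{-})$; (QMV*7) $0=-0$; (QMV*8) $x\oplus(-x)=0$; (QMV*9) $-(x\oplus y)=-x\oplus(-y)$; (QMV*10) $-(-x)=x$; (QMV*11) $(-x\oplus(x\oplus y))^{+}=-x^{+}\oplus(x^{+}\oplus y^{+})$; (QMV*12) $x\vee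 y=y\vee x$; (QMV*13) $x\vee(y\vee z)=(x\vee y)\vee z$; (QMV*14) $x\oplus(y\vee z)=(x\oplus y)\vee(x\oplus z)$; where $x\vee y:=(x^{+}\oplus(-x^{+}\oplus y^{+})^{+})\oplus(x^{-}\oplus(-x^{-}\oplus y^{-})^{+})$, and ${}^+,{}^-$ bind tighter than $-$. A quasi-Wajsberg* algebra is an algebra $\langle W;\to,\neg,{}^{+},{}^{-},1\rangle$ of type $\langle2,1,1,1,0\rangle$ such that for all $x,y,z\in W$: (QW*1) $x\to y=\neg y\to\neg x$; (QW*2) $(x\to 1)\to((y\to 1)\to z)=(y\to 1)\to((x\to 1)\to z)$; (QW*3) $(1\to x)\to 1=1$; (QW*4) $(z\to z)\to(x\to y)=x\to y$; (QW*5) $(1\to 1)\to x^{+}=((1\to 1)\to x)^{+}=(x\to 1)\to 1$ and $(1\to 1)\to x^{-}=((1\to 1)\to x)^{-}=(x\to\neg 1)\to\neg 1$; (QW*6) $x\to y=(y^{+}\to x^{-})\to(x^{+}\to y^{-})$; (QW*7) $\neg(x\to y)=y\to x$; (QW*8) $\neg\neg x=x$; (QW*9) $(x\to(\neg x\to y))^{+}=x^{+}\to(\neg x^{+}\to y^{+})$; (QW*10) $x\vee y=y\vee x$; (QW*11) $x\vee(y\vee z)=(x\vee y)\vee z$; (QW*12) $x\to(y\vee z)=(x\to y)\vee(x\to z)$; where $x\vee y:=((x^{+}\to y^{+})^{+}\to(\neg x)^{-})\to((y^{-}\to x^{-})^{-}\to x^{-})$. Conventions: ${}^+,{}^-$ bind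 tighter than $\neg$, which binds tighter than $\to$. *)

(* Defs.v *)
Section QMV.
Variables (A : Type) (oplus : A -> A -> A) (neg : A -> A)
  (pl mi : A -> A) (zero one : A).

Definition qmv_join (x y : A) : A :=
  oplus (oplus (pl x) (pl (oplus (neg (pl x)) (pl y))))
        (oplus (mi x) (pl (oplus (neg (mi x)) (mi y)))).

Definition is_quasi_MVstar : Prop :=
  (forall x y, oplus x y = oplus y x) /\
  (forall x y z, oplus (oplus one x) (oplus y (oplus one z))
                 = oplus (oplus (oplus one x) y) (oplus one z)) /\
  (forall x, oplus (oplus x one) one = one) /\
  (forall x y, oplus (oplus x y) zero = oplus x y) /\
  (forall x, oplus (pl x) zero = pl (oplus x zero) /\
             pl (oplus x zero) = oplus one (oplus (neg one) x)) /\
  (forall x, oplus (mi x) zero = mi (oplus x zero) /\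
             mi (oplus x zero) = oplus (neg one) (oplus one x)) /\
  (forall x y, oplus x y = oplus (oplus (pl x) (pl y)) (oplus (mi x) (mi y))) /\
  zero = neg zero /\
  (forall x, oplus x (neg x) = zero) /\
  (forall x y, neg (oplus x y) = oplus (neg x) (neg y)) /\
  (forall x, neg (neg x) = x) /\
  (forall x y, pl (oplus (neg x) (oplus x y))
               = oplus (neg (pl x)) (oplus (pl x) (pl y))) /\
  (forall x y, qmv_join x y = qmv_join y x) /\
  (forall x y z, qmv_join x (qmv_join y z) = qmv_join (qmv_join x y) z) /\
  (forall x y z, oplus x (qmv_join y z) = qmv_join (oplus x y) (oplus x z)).
End QMV.

Section QW.
Variables (W : Type) (imp : W -> W -> W) (lneg : W -> W)
  (pl mi : W -> W) (one : W).

Definition qw_join (x y : W) : W :=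
  imp (imp (pl (imp (pl x) (pl y))) (mi (lneg x)))
      (imp (mi (imp (mi y) (mi x))) (mi x)).

Definition is_quasi_Wstar : Prop :=
  (forall x y, imp x y = imp (lneg y) (lneg x)) /\
  (forall x y z, imp (imp x one) (imp (imp y one) z)
                 = imp (imp y one) (imp (imp x one) z)) /\
  (forall x, imp (imp one x) one = one) /\
  (forall x y z, imp (imp z z) (imp x y) = imp x y) /\
  (forall x, imp (imp one one) (pl x) = pl (imp (imp one one) x) /\
             pl (imp (imp one one) x) = imp (imp x one) one) /\
  (forall x, imp (imp one one) (mi x) = mi (imp (imp one one) x) /\
             mi (imp (imp one one) x) = imp (imp x (lneg one)) (lneg one)) /\
  (forall x y, imp x y = imp (imp (pl y) (mi x)) (imp (pl x) (mi y))) /\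
  (forall x y, lneg (imp x y) = imp y x) /\
  (forall x, lneg (lneg x) = x) /\
  (forall x y, pl (imp x (imp (lneg x) y))
               = imp (pl x) (imp (lneg (pl x)) (pl y))) /\
  (forall x y, qw_join x y = qw_join y x) /\
  (forall x y z, qw_join x (qw_join y z) = qw_join (qw_join x y) z) /\
  (forall x y z, imp x (qw_join y z) = qw_join (imp x y) (imp x z)).
End QW.

Definition f_imp {A : Type} (oplus : A -> A -> A) (neg : A -> A) (x y : A) : A :=
  oplus (neg x) y.
Arguments qmv_join {A} oplus neg pl mi x y.
Arguments is_quasi_MVstar {A} oplus neg pl mi zero one.
Arguments qw_join {W} imp lneg pl mi x y.
Arguments is_quasi_Wstar {W} imp lneg pl mi one.

(* Main.v *)
Require Import Defs.

Theorem proposition3p6 (A : Type) (oplus : A -> A -> A) (neg : A -> A)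
  (pl mi : A -> A) (zero one : A) :
  is_quasi_MVstar oplus neg pl mi zero one ->
  is_quasi_Wstar (f_imp oplus neg) neg pl mi one.
Proof.
  intros [Hc [H2 [H3 [H4 [Hpl [Hmi [H6 [H7 [H8 [H9 [H10 [H11 [H12 [H13 H14]]]]]]]]]]]]]].
  assert (ninj : forall a b, neg a = neg b -> a = b).
  { intros a b E. rewrite <- (H10 a), <- (H10 b), E. reflexivity. }
  assert (z0 : oplus zero zero = zero).
  { pattern zero at 2. rewrite H7. apply H8. }
  assert (sreg : forall x y, oplus (oplus x y) zero = oplus x y) by exact H4.
  assert (onereg : oplus one zero = one).
  { rewrite <- (H3 one). rewrite H4. reflexivity. }
  assert (nonereg : oplus (neg one) zero = neg one).
  { pattern zero at 1. rewrite H7. rewrite <- H9. rewrite onereg. reflexivity. }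
  assert (pl0 : pl zero = zero).
  { destruct (Hpl zero) as [_ E]. rewrite z0 in E. rewrite E, nonereg, H8. reflexivity. }
  assert (mi0 : mi zero = zero).
  { destruct (Hmi zero) as [_ E]. rewrite z0 in E. rewrite E, onereg, Hc, H8. reflexivity. }
  assert (jj : forall y, qmv_join oplus neg pl mi y y = oplus y zero).
  { intro y. unfold qmv_join. rewrite (Hc (neg (pl y))), (Hc (neg (mi y))), !H8, pl0.
    rewrite (H6 y zero), pl0, mi0. reflexivity. }
  assert (Zr : forall x y, oplus x (oplus y zero) = oplus x y).
  { intros x y. rewrite <- jj, H14, jj, H4. reflexivity. }
  assert (cong_r : forall x u v, oplus u zero = oplus v zero -> oplus x u = oplus x v).
  { intros x u v E. rewrite <- (Zr x u), E, Zr. reflexivity. }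
  assert (cong_l : forall x u v, oplus u zero = oplus v zero -> oplus u x = oplus v x).
  { intros x u v E. rewrite (Hc u), (Hc v). apply cong_r. exact E. }
  assert (L1 : forall z, oplus (neg (mi z)) zero = oplus (pl (neg z)) zero).
  { intro z. destruct (Hmi z) as [E1 E2]. destruct (Hpl (neg z)) as [F1 F2].
    rewrite F1, F2. pattern zero at 1. rewrite H7. rewrite <- H9, E1, E2.
    rewrite !H9, !H10. reflexivity. }
  assert (L2 : forall z, oplus (neg (pl z)) zero = oplus (mi (neg z)) zero).
  { intro z. destruct (Hpl z) as [E1 E2]. destruct (Hmi (neg z)) as [F1 F2].
    rewrite F1, F2. pattern zero at 1. rewrite H7. rewrite <- H9, E1, E2.
    rewrite !H9, !H10. reflexivity. }
  assert (swap : forall a b c, oplus (oplus one a) (oplus (oplus one b) c)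
                             = oplus (oplus one b) (oplus (oplus one a) c)).
  { intros a b c. rewrite (Hc (oplus one b) c), H2, Hc. reflexivity. }
  assert (I11 : f_imp oplus neg one one = zero).
  { unfold f_imp. rewrite Hc. apply H8. }
  assert (J : forall x y, qw_join (f_imp oplus neg) neg pl mi x y = qmv_join oplus neg pl mi x y).
  { intros x y. unfold qw_join, qmv_join, f_imp. rewrite !H9, !H10.
    rewrite (cong_r (pl (oplus (neg (pl x)) (pl y))) _ _ (L1 (neg x))), H10.
    rewrite (cong_l (mi x) _ _ (L1 (oplus (neg (mi y)) (mi x)))).
    rewrite H9, H10, (Hc (mi y)).
    rewrite (Hc (pl (oplus (neg (pl x)) (pl y)))).
    rewrite (Hc (pl (oplus (neg (mi x)) (mi y)))). reflexivity. }
  unfold is_quasi_Wstar.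
  split; [| split; [| split; [| split; [| split; [| split; [| split; [| split; [| split; [| split; [| split; [| split]]]]]]]]]]].
  - intros x y. unfold f_imp. rewrite H10. apply Hc.
  - intros x y z. unfold f_imp. apply ninj. rewrite !H9, !H10.
    rewrite (Hc (neg x) one), (Hc (neg y) one). apply swap.
  - intros x. unfold f_imp. rewrite H9, H10, (Hc one (neg x)). apply H3.
  - intros x y z. unfold f_imp. rewrite (Hc (neg z) z), H8, <- H7, Hc. apply H4.
  - intros x. rewrite I11. unfold f_imp. rewrite <- H7. rewrite !(Hc zero).
    destruct (Hpl x) as [E1 E2]. split; [exact E1|].
    rewrite E2, H9, H10, (Hc (oplus x (neg one))), (Hc x). reflexivity.
  - intros x. rewrite I11. unfold f_imp. rewrite <- H7. rewrite !(Hc zero).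
    destruct (Hmi x) as [E1 E2]. split; [exact E1|].
    rewrite E2, H9, !H10, (Hc (oplus x one)), (Hc x). reflexivity.
  - intros x y. unfold f_imp. rewrite H9, H10, (H6 (neg x) y).
    rewrite (cong_r (pl y) _ _ (L1 x)), (Hc (pl y)).
    rewrite (cong_l (mi y) _ _ (L2 x)). reflexivity.
  - intros x y. unfold f_imp. rewrite H9, H10. apply Hc.
  - exact H10.
  - intros x y. unfold f_imp. rewrite !H10. apply H11.
  - intros x y. rewrite !J. apply H12.
  - intros x y z. rewrite !J. apply H13.
  - intros x y z. rewrite !J. unfold f_imp. apply H14.
Qed.
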